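(* For an integer $n>1$ define, for every integer $1\le r\le n-1$, $$E^{P}_{n}(r)=\frac{r}{n}\sum_{k=r+1}^{n}\frac{1+\frac{k}{n}}{k-1},$$ and let $\mathcal{M}(n)$ be a value of $r$ at which $E^P_n$ attains its maximum. Let $\mu=\frac12 W(2)=0.42630\dots$. Then (i) $\lim_{n\to\infty}\mathcal{M}(n)/n=\mu$; (ii) $\lim_{n\to\infty}E^P_n(\mathcal{M}(n))=\lim_{n\to\infty}E^P_n(\lfloor\mu n\rfloor)=\mu(1+\mu)=0.608037\dots$.
   Context: $W$ denotes the principal (main) branch of the Lambert $W$ function, i.e. the inverse of $z\mapsto ze^z$ on $[-1,\infty)$, so that $z=W(ze^z)$ for $z\ge -1$. *)

(* Defs.v *)
From Stdlib Require Import Reals Lra Lia ClassicalEpsilon.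
From Coquelicot Require Import Coquelicot.
Open Scope R_scope.

(* Principal branch of Lambert W: the unique w >= -1 with w e^w = x
   (chosen by Hilbert's epsilon; for x >= -1/e this is W(x)). *)
Definition LambertW (x : R) : R :=
  epsilon (inhabits 0) (fun w => -1 <= w /\ w * exp w = x).

Definition EP (n r : nat) : R :=
  (INR r / INR n) *
  sum_n_m (fun k : nat => (1 + INR k / INR n) / (INR k - 1)) (S r) n.

Definition mu : R := LambertW 2 / 2.

Definition floorN (x : R) : nat := Z.to_nat (Int_part x).

(* Main.v *)
Require Import Defs.
From Stdlib Require Import Reals Lra Lia ZArith ClassicalEpsilon.
From Coquelicot Require Import Coquelicot.
Open Scope R_scope.
Lemma ln_le_m1 y : 0 < y -> ln y <= y - 1.
Proof.
  intros Hy. destruct (Req_dec (ln y) 0) as [E|E].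
  - rewrite E. assert (y = 1). { rewrite <- (exp_ln y Hy), E, exp_0. reflexivity. } lra.
  - pose proof (exp_ineq1 _ E). rewrite exp_ln in H by lra. lra.
Qed.

Lemma mu_spec : 0 < mu /\ mu < 1/2 /\ ln mu = - 2 * mu.
Proof.
  assert (Hex : exists w, -1 <= w /\ w * exp w = 2).
  { assert (Hc : continuity (fun w => w * exp w - 2)).
    { apply continuity_minus. apply continuity_mult.
      apply derivable_continuous, derivable_id.
      apply derivable_continuous, derivable_exp.
      apply continuity_const. intros a b; reflexivity. }
    assert (He : 2 < exp 1). { pose proof (exp_ineq1 1). lra. }
    destruct (IVT _ 0 1 Hc ltac:(lra)) as [z [Hz1 Hz2]].
    - rewrite exp_0. lra.
    - lra.
    - exists z. split; lra. }
  pose proof (epsilon_spec (inhabits 0) (fun w => -1 <= w /\ w * exp w = 2) Hex) as [H1 H2].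
  unfold mu, LambertW. set (w := epsilon _ _) in *.
  assert (Hexp : 0 < exp w) by apply exp_pos.
  assert (Hw : 0 < w). { destruct (Rle_or_lt w 0); nra. }
  assert (Hw1 : w < 1).
  { destruct (Rle_or_lt 1 w) as [H|H]; auto.
    assert (exp 1 <= exp w). { destruct H as [H|H]. left; apply exp_increasing; auto. right; rewrite H; reflexivity. }
    pose proof (exp_ineq1 1). nra. }
  split; [lra|split;[lra|]].
  assert (E : w / 2 = / exp w). { apply Rmult_eq_reg_l with (exp w); [|lra]. rewrite Rinv_r by lra. lra. }
  rewrite E, ln_Rinv by auto. rewrite ln_exp. lra.
Qed.

Lemma ln_step R : 0 < R -> 1/(R+1) <= ln (R+1) - ln R <= 1/R.
Proof.
  intros HR. split.
  - pose proof (ln_le_m1 (R/(R+1)) ltac:(apply Rdiv_lt_0_compat; lra)).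
    rewrite ln_div in H by lra.
    assert (R/(R+1) - 1 = - (1/(R+1))) by (field; lra). lra.
  - pose proof (ln_le_m1 ((R+1)/R) ltac:(apply Rdiv_lt_0_compat; lra)).
    rewrite ln_div in H by lra.
    assert ((R+1)/R - 1 = 1/R) by (field; lra). lra.
Qed.

Lemma sum_bnd n : (1 < n)%nat -> forall k r, (r + k = n)%nat -> (1 <= r)%nat ->
  (ln (INR n) - ln (INR r))*(1+1/INR n) + (INR n - INR r)/INR n
  <= sum_n_m (fun k : nat => (1 + INR k / INR n) / (INR k - 1)) (S r) n
  <= (ln (INR n) - ln (INR r) + 1/INR r)*(1+1/INR n) + (INR n - INR r)/INR n.
Proof.
  intros Hn. assert (HN : 1 < INR n) by (apply lt_1_INR; lia).
  induction k as [|k IH]; intros r Hr H1.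
  - assert (r = n) by lia. subst r.
    rewrite sum_n_m_zero by lia.
    replace (ln (INR n) - ln (INR n)) with 0 by ring.
    assert (0 <= 1 / INR n * (1 + 1/INR n)).
    { apply Rmult_le_pos; apply Rlt_le; try apply Rplus_lt_0_compat; try lra; apply Rdiv_lt_0_compat; lra. }
    change (@zero R_AbelianMonoid) with 0.
    replace ((INR n - INR n) / INR n) with 0 by (field; lra). lra.
  - specialize (IH (S r) ltac:(lia) ltac:(lia)).
    rewrite sum_Sn_m by lia.
    change (@plus R_AbelianMonoid) with Rplus.
    rewrite S_INR in *.
    assert (HR : 1 <= INR r) by (apply (le_INR 1); lia).
    pose proof (ln_step (INR r) ltac:(lra)) as [L1 L2].
    set (R := INR r) in *. set (N := INR n) in *.
    set (s := sum_n_m _ _ _) in *.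
    replace ((1 + (R + 1) / N) / (R + 1 - 1)) with (1/R*(1+1/N) + 1/N) by (field; lra).
    assert (0 < 1 + 1/N). { assert (0 < 1/N) by (apply Rdiv_lt_0_compat; lra). lra. }
    assert (E1 : (N - R)/N = (N - (R+1))/N + 1/N) by (field; lra).
    rewrite E1.
    split.
    + assert ((ln N - ln R) * (1 + 1/N) <= (ln N - ln (R+1)) * (1 + 1/N) + 1/R*(1+1/N)) by nra.
      lra.
    + assert ((ln N - ln (R+1) + 1/(R+1)) * (1 + 1/N) <= (ln N - ln R) * (1 + 1/N)) by nra.
      lra.
Qed.

Definition F (x : R) := x * (1 - x - ln x).

Lemma EP_bnd n r : (1 < n)%nat -> (1 <= r <= n)%nat ->
  F (INR r / INR n) <= EP n r <= F (INR r / INR n) + 3 / INR n.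
Proof.
  intros Hn Hr.
  pose proof (sum_bnd n Hn (n - r) r ltac:(lia) ltac:(lia)) as [S1 S2].
  unfold EP, F.
  assert (HN : 1 < INR n) by (apply lt_1_INR; lia).
  assert (HR : 1 <= INR r) by (apply (le_INR 1); lia).
  assert (HRN : INR r <= INR n) by (apply le_INR; lia).
  set (s := sum_n_m _ _ _) in *.
  set (R := INR r) in *. set (N := INR n) in *.
  rewrite ln_div by lra.
  assert (HL : 0 <= ln N - ln R). { pose proof (ln_le R N ltac:(lra) HRN). lra. }
  pose proof (ln_le_m1 (N/R) ltac:(apply Rdiv_lt_0_compat; lra)) as HL2.
  rewrite ln_div in HL2 by lra.
  set (L := ln N - ln R) in *.
  replace (ln R - ln N) with (- L) by (unfold L; ring).
  set (i := 1 / N).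
  assert (Hi : 0 < i < 1). { unfold i. split. apply Rdiv_lt_0_compat; lra.
    apply Rmult_lt_reg_r with N; [lra|]. field_simplify; lra. }
  set (x := R / N).
  assert (Hx : 0 < x <= 1). { unfold x; split. apply Rdiv_lt_0_compat; lra.
    apply Rmult_le_reg_r with N; [lra|]. field_simplify; lra. }
  assert (E1 : (N - R)/N = 1 - x) by (unfold x; field; lra).
  assert (E2 : x * (1/R) = i) by (unfold x, i; field; lra).
  assert (E3 : x * (N/R) = 1) by (unfold x; field; lra).
  assert (E4 : 3 / N = 3 * i) by (unfold i; field; lra).
  rewrite E1 in S1, S2. rewrite E4.
  assert (xL : x * L <= 1 - x) by nra.
  fold i in S1, S2.
  split.
  - assert (x * (L*(1+i) + (1 - x)) <= x * s) by (apply Rmult_le_compat_l; lra).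
    assert (0 <= x * L * i) by (apply Rmult_le_pos; [apply Rmult_le_pos|]; lra).
    nra.
  -
    assert (x * s <= x * ((L + 1/R)*(1+i) + (1 - x))) by (apply Rmult_le_compat_l; lra).
    assert (x * L * i <= i) by nra.
    assert (i * i <= i) by nra.
    nra.
Qed.

Lemma F_mu : F mu = mu * (1 + mu).
Proof. destruct mu_spec as [? [? E]]. unfold F. rewrite E. ring. Qed.

Lemma F_up x : 0 < x -> F x <= F mu - (x - mu)^2.
Proof.
  intros Hx. destruct mu_spec as [H0 [H1 E]].
  pose proof (ln_le_m1 (mu/x) ltac:(apply Rdiv_lt_0_compat; lra)) as H.
  rewrite ln_div in H by lra.
  assert (x * (ln mu - ln x) <= mu - x).
  { assert (x * (ln mu - ln x) <= x * (mu/x - 1)) by (apply Rmult_le_compat_l; lra).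
    replace (x * (mu/x - 1)) with (mu - x) in H2 by (field; lra). lra. }
  unfold F. rewrite E in *. nra.
Qed.

Lemma F_lo x : 0 < x -> F mu - (x - mu)^2 * (1 + 1 / mu) <= F x.
Proof.
  intros Hx. destruct mu_spec as [H0 [H1 E]].
  pose proof (ln_le_m1 (x/mu) ltac:(apply Rdiv_lt_0_compat; lra)) as H.
  rewrite ln_div in H by lra.
  assert (x * (ln x - ln mu) <= x * (x/mu - 1)) by (apply Rmult_le_compat_l; lra).
  assert (E2 : (x - mu)^2 * (1 + 1/mu) = (x - mu)^2 + x * (x/mu - 1) - x + mu) by (field; lra).
  rewrite E2. unfold F. rewrite E in *. nra.
Qed.

Lemma conv (u : nat -> R) l K : 0 <= K ->
  (exists N, forall n, (N <= n)%nat -> (u n - l)^2 <= K / INR n) -> is_lim_seq u l.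
Proof.
  intros HK [N HN]. apply is_lim_seq_spec. intros eps.
  destruct eps as [e He]; simpl.
  destruct (archimed_cor1 (e*e/(K+1)) ltac:(apply Rdiv_lt_0_compat; nra)) as [M [HM1 HM2]].
  exists (Nat.max N M). intros n Hn.
  specialize (HN n ltac:(lia)).
  assert (HMn : INR M <= INR n) by (apply le_INR; lia).
  assert (HM0 : 0 < INR M) by (apply lt_0_INR; lia).
  assert (Hin : / INR n <= / INR M) by (apply Rinv_le_contravar; lra).
  assert (K / INR n <= (K+1) * / INR n) by (unfold Rdiv; assert (0 < / INR n) by (apply Rinv_0_lt_compat; lra); nra).
  assert ((K+1) * / INR M < e * e).
  { apply Rmult_lt_compat_l with (r := K+1) in HM1; [|lra].
    replace ((K+1) * (e*e/(K+1))) with (e*e) in HM1 by (field; lra). lra. }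
  assert ((K+1) * / INR n <= (K+1) * / INR M) by (apply Rmult_le_compat_l; lra).
  assert (Hsq : (u n - l)^2 < e*e) by lra.
  change (ball l e (u n)) with (Rabs (u n - l) < e).
  unfold Rabs; destruct Rcase_abs; nra.
Qed.

Lemma conv_abs (u : nat -> R) l K : 0 <= K ->
  (exists N, forall n, (N <= n)%nat -> - (K / INR n) <= u n - l <= K / INR n) -> is_lim_seq u l.
Proof.
  intros HK [N HN]. apply (conv u l (K*K)). nra.
  exists (Nat.max N 1). intros n Hn. specialize (HN n ltac:(lia)).
  assert (H1 : 1 <= INR n) by (apply (le_INR 1); lia).
  assert (E : K*K / INR n = (K / INR n) * (K / INR n) * INR n) by (field; lra).
  rewrite E.
  assert (0 <= K / INR n) by (apply Rdiv_le_0_compat; lra).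
  assert ((u n - l)^2 <= (K / INR n) * (K / INR n)) by nra.
  nra.
Qed.

Lemma floor_spec x : 0 <= x -> INR (floorN x) <= x < INR (floorN x) + 1.
Proof.
  intros Hx. destruct (base_Int_part x) as [H1 H2].
  assert (Hp : (0 <= Int_part x)%Z).
  { assert (Hz : (-1 < Int_part x)%Z) by (apply lt_IZR; lra). lia. }
  unfold floorN. rewrite INR_IZR_INZ, Z2Nat.id by exact Hp. lra.
Qed.

Theorem proposition4 (M : nat -> nat)
  (HM : forall n : nat, (1 < n)%nat ->
        (1 <= M n <= n - 1)%nat /\
        (forall r : nat, (1 <= r <= n - 1)%nat -> EP n r <= EP n (M n))) :
  is_lim_seq (fun n => INR (M n) / INR n) mu /\
  is_lim_seq (fun n => EP n (M n)) (mu * (1 + mu)) /\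
  is_lim_seq (fun n => EP n (floorN (mu * INR n))) (mu * (1 + mu)).
Proof.
  destruct mu_spec as [Hm0 [Hm1 _]].
  destruct (archimed_cor1 mu Hm0) as [N0 [HN0 HN0']].
  set (K := 4 + 1 / mu).
  assert (HK : 0 <= K) by (unfold K; assert (0 < 1/mu) by (apply Rdiv_lt_0_compat; lra); lra).
  assert (Key : forall n, (Nat.max N0 2 <= n)%nat ->
    (INR (M n) / INR n - mu)^2 <= K / INR n /\
    - (K / INR n) <= EP n (M n) - mu * (1 + mu) <= K / INR n /\
    - (K / INR n) <= EP n (floorN (mu * INR n)) - mu * (1 + mu) <= K / INR n).
  { intros n Hn.
    assert (HN : 2 <= INR n) by (apply (le_INR 2); lia).
    assert (HN0n : INR N0 <= INR n) by (apply le_INR; lia).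
    assert (HN0p : 0 < INR N0) by (apply lt_0_INR; lia).
    assert (Hmn : 1 < mu * INR n).
    { apply Rmult_lt_compat_r with (r := INR N0) in HN0; [|lra].
      rewrite Rinv_l in HN0 by lra. nra. }
    destruct (floor_spec (mu * INR n) ltac:(nra)) as [Fl1 Fl2].
    set (r := floorN (mu * INR n)) in *.
    assert (Hr1 : (0 < r)%nat) by (apply INR_lt; simpl; lra).
    assert (Hr2 : (r < n)%nat) by (apply INR_lt; nra).
    destruct (HM n ltac:(lia)) as [[HM1 HM2] HM3].
    specialize (HM3 r ltac:(lia)).
    destruct (EP_bnd n r ltac:(lia) ltac:(lia)) as [E1 E2].
    destruct (EP_bnd n (M n) ltac:(lia) ltac:(lia)) as [E3 E4].
    assert (HMp : 1 <= INR (M n)) by (apply (le_INR 1); lia).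
    set (i := 1 / INR n).
    assert (Hi : 0 < i <= 1/2). { unfold i. split. apply Rdiv_lt_0_compat; lra.
      apply Rmult_le_reg_r with (INR n); [lra|]. field_simplify; lra. }
    assert (EK : K / INR n = K * i) by (unfold i; field; lra).
    assert (E3i : 3 / INR n = 3 * i) by (unfold i; field; lra).
    rewrite EK. rewrite E3i in *.
    set (x := INR r / INR n).
    set (y := INR (M n) / INR n).
    change (F (INR r / INR n)) with (F x) in E1, E2.
    change (F (INR (M n) / INR n)) with (F y) in E3, E4.
    assert (Hx0 : 0 < x) by (unfold x; apply Rdiv_lt_0_compat; lra).
    assert (Hy0 : 0 < y) by (unfold y; apply Rdiv_lt_0_compat; lra).
    assert (Hxm : - i <= x - mu <= 0).
    { assert (x - mu = (INR r - mu * INR n) * i) by (unfold x, i; field; lra). nra. }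
    pose proof (F_lo x Hx0) as Fx. pose proof (F_up x Hx0) as Fx2.
    pose proof (F_up y Hy0) as Fy.
    rewrite F_mu in Fx, Fx2, Fy.
    assert (Hc : 0 < 1/mu) by (apply Rdiv_lt_0_compat; lra).
    assert (Hxm2 : (x - mu)^2 <= i) by nra.
    assert (Hxm3 : (x - mu)^2 * (1 + 1/mu) <= i * (1 + 1/mu)) by (apply Rmult_le_compat_r; lra).
    assert (Hlow : EP n r >= mu * (1 + mu) - i * (1 + 1/mu))  by lra.
    assert (Ex : (4 + 1/mu) * i = 3 * i + i * (1 + 1/mu)) by ring.
    assert (0 <= (x - mu)^2) by nra.
    assert (0 <= i * (1 + 1/mu)) by nra.
    assert (0 <= (y - mu)^2) by apply pow2_ge_0.
    unfold K. rewrite Ex. split; [|split]. lra. split; lra. split; lra. }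
  split; [|split].
  - apply (conv _ _ K HK). exists (Nat.max N0 2). intros n Hn. apply (Key n Hn).
  - apply (conv_abs _ _ K HK). exists (Nat.max N0 2). intros n Hn. apply (Key n Hn).
  - apply (conv_abs _ _ K HK). exists (Nat.max N0 2). intros n Hn. apply (Key n Hn).
Qed.
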